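(* Let $\rho\ge1$, $P_2>0$, and for $i=1,\dots,\rho$ let $0<\alpha_i<1$ and $\beta_i>0$. For $\xi>0$ define $$\varphi_i(\xi)=\max\Big(0,\;\frac{\alpha_i}{2}-1+\sqrt{\frac{\alpha_i^2}{4}+\frac{\alpha_i}{\beta_i}\xi}\Big),\qquad i=1,\dots,\rho.$$ Then the equation $P_2=\sum_{i=1}^{\rho}\beta_i\varphi_i(\xi)$ has a unique solution $\xi>0$, and for this $\xi$ the vector $x_i=\varphi_i(\xi)$, $i=1,\dots,\rho$, is an optimal solution of the convex problem $$\min_{x_1,\dots,x_\rho}\;-\sum_{i=1}^{\rho}\ln\Big\{1-\frac{\alpha_i}{1+x_i}\Big\}\quad\text{s.t.}\quad\sum_{i=1}^{\rho}\beta_i x_i\le P_2,\ \ x_i\ge0,\ i=1,\dots,\rho.$$ *)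

(* Defs.v *)
From Stdlib Require Import Reals.
Open Scope R_scope.

Fixpoint rsum (n : nat) (f : nat -> R) : R :=
  match n with
  | O => 0
  | S m => rsum m f + f m
  end.

Definition varphi (alpha beta xi : R) : R :=
  Rmax 0 (alpha / 2 - 1 + sqrt (alpha ^ 2 / 4 + alpha / beta * xi)).

Definition objective (rho : nat) (alpha : nat -> R) (x : nat -> R) : R :=
  - rsum rho (fun i => ln (1 - alpha i / (1 + x i))).

Definition feasible (rho : nat) (beta : nat -> R) (P2 : R) (x : nat -> R) : Prop :=
  rsum rho (fun i => beta i * x i) <= P2 /\ (forall i, (i < rho)%nat -> 0 <= x i).

(* Main.v *)
Require Import Defs.
From Stdlib Require Import Reals Lra Psatz Ranalysis5.
Open Scope R_scope.

Lemma rsum_le n f g : (forall i, (i < n)%nat -> f i <= g i) -> rsum n f <= rsum n g.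
Proof. induction n; simpl; intros H. lra. assert (f n <= g n) by (apply H; lia).
  assert (rsum n f <= rsum n g) by (apply IHn; intros; apply H; lia). lra. Qed.

Lemma rsum_lin n a b c k : rsum n (fun i => a i + k * (b i - c i)) = rsum n a + k * (rsum n b - rsum n c).
Proof. induction n; simpl. ring. rewrite IHn. ring. Qed.

Lemma rsum_zero n f : (forall i, (i < n)%nat -> f i = 0) -> rsum n f = 0.
Proof. induction n; simpl; intros H. lra. rewrite IHn, H; try lra; try lia. intros; apply H; lia. Qed.

Lemma rsum_ge_term n f k : (forall i, (i < n)%nat -> 0 <= f i) -> (k < n)%nat -> f k <= rsum n f.
Proof. induction n; simpl; intros H Hk. lia.
  assert (0 <= rsum n f) by (rewrite <- (rsum_zero n (fun _ => 0)) by auto; apply rsum_le; intros; apply H; lia).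
  destruct (Nat.eq_dec k n). subst. lra.
  assert (f k <= rsum n f) by (apply IHn; [intros; apply H; lia| lia]).
  assert (0 <= f n) by (apply H; lia). lra. Qed.

Lemma rsum_strict n f g : (forall i, (i < n)%nat -> (f i = 0 /\ 0 <= g i) \/ f i < g i) ->
  rsum n f <= rsum n g /\ (rsum n f = 0 \/ rsum n f < rsum n g).
Proof. induction n; simpl; intros H. lra.
  destruct IHn as [H1 H2]. intros; apply H; lia.
  destruct (H n) as [[]|]; [lia | | ]; lra. Qed.

Lemma rsum_cont n (f : nat -> R -> R) a : (forall i, (i < n)%nat -> continuity_pt (f i) a) ->
  continuity_pt (fun t => rsum n (fun i => f i t)) a.
Proof. induction n; simpl; intros H.
  apply continuity_pt_const. intros x y; reflexivity.
  apply (continuity_pt_plus (fun t => rsum n (fun i => f i t)) (f n)).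
  apply IHn; intros; apply H; lia. apply H; lia. Qed.

Lemma max0_cont t : continuity_pt (fun t => Rmax 0 t) t.
Proof.
  apply (continuity_pt_locally_ext (fun t => (t + Rabs t) / 2) _ 1). lra.
  intros y _. unfold Rmax, Rabs. destruct Rle_dec, Rcase_abs; lra.
  unfold Rdiv. apply (continuity_pt_mult (fun t => t + Rabs t) (fun _ => /2)).
  apply (continuity_pt_plus id Rabs). apply derivable_continuous_pt, derivable_pt_id.
  apply Rcontinuity_abs. apply continuity_pt_const. intros x y; reflexivity. Qed.

Lemma varphi_cont al be a : 0 < al -> 0 < be -> 0 <= a -> continuity_pt (varphi al be) a.
Proof. intros Ha Hb H0.
  apply (continuity_pt_comp (fun t => al/2 - 1 + sqrt (al^2/4 + al/be*t)) (fun t => Rmax 0 t)); [|apply max0_cont].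
  apply (continuity_pt_plus (fun _ => al/2-1) (fun t => sqrt (al^2/4 + al/be*t))).
  apply continuity_pt_const. intros x y; reflexivity.
  apply (continuity_pt_comp (fun t => al^2/4 + al/be*t) sqrt).
  apply (continuity_pt_plus (fun _ => al^2/4) (fun t => al/be*t)).
  apply continuity_pt_const. intros x y; reflexivity.
  apply (continuity_pt_mult (fun _ => al/be) id).
  apply continuity_pt_const. intros x y; reflexivity.
  apply derivable_continuous_pt, derivable_pt_id.
  apply continuity_pt_sqrt.
  assert (0 <= al/be*a) by (apply Rmult_le_pos; [apply Rlt_le, Rdiv_lt_0_compat|]; lra). nra. Qed.

Lemma varphi0 al be : 0 < al < 1 -> varphi al be 0 = 0.
Proof. intros H. unfold varphi. rewrite Rmult_0_r, Rplus_0_r. replace (al^2/4) with ((al/2)*(al/2)) by field.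
  rewrite sqrt_square by lra. apply Rmax_left. lra. Qed.

Lemma varphi_ge0 al be t : 0 <= varphi al be t.
Proof. apply Rmax_l. Qed.

Lemma varphi_mono al be t1 t2 : 0 < al -> 0 < be -> 0 <= t1 < t2 ->
  (varphi al be t1 = 0 /\ 0 <= varphi al be t2) \/ varphi al be t1 < varphi al be t2.
Proof. intros Ha Hb Ht. unfold varphi.
  assert (0 <= al/be*t1) by (apply Rmult_le_pos; [apply Rlt_le, Rdiv_lt_0_compat|]; lra).
  assert (al/be*t1 < al/be*t2) by (apply Rmult_lt_compat_l; [apply Rdiv_lt_0_compat|]; lra).
  assert (sqrt (al^2/4 + al/be*t1) < sqrt (al^2/4 + al/be*t2)) by (apply sqrt_lt_1_alt; split; nra).
  pose proof (Rmax_l 0 (al / 2 - 1 + sqrt (al ^ 2 / 4 + al / be * t2))).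
  pose proof (Rmax_r 0 (al / 2 - 1 + sqrt (al ^ 2 / 4 + al / be * t2))).
  destruct (Rle_dec 0 (al / 2 - 1 + sqrt (al ^ 2 / 4 + al / be * t1))).
  right. rewrite (Rmax_right 0 _ r). lra.
  left. rewrite Rmax_left by lra. lra. Qed.

Lemma ln_le t : 0 < t -> ln t <= t - 1.
Proof. intros. pose proof (exp_ineq1_le (ln t)). rewrite exp_ln in H0; lra. Qed.

Lemma div_le a b c d : 0 < b -> 0 < d -> a * d <= c * b -> a / b <= c / d.
Proof. intros Hb Hd H.
  assert (a/b - c/d = (a*d - c*b) * (/b * /d)) by (field; lra).
  assert (0 < /b * /d) by (apply Rmult_lt_0_compat; apply Rinv_0_lt_compat; lra).
  assert ((a*d - c*b) * (/b * /d) <= 0) by nra. lra. Qed.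

Lemma key al be xi y : 0 < al < 1 -> 0 < be -> 0 < xi -> 0 <= y ->
  ln (1 - al / (1 + y)) <= ln (1 - al / (1 + varphi al be xi)) + / xi * (be * y - be * varphi al be xi).
Proof. intros Ha Hb Hxi Hy.
  assert (Hp : 0 < al/be*xi) by (apply Rmult_lt_0_compat; [apply Rdiv_lt_0_compat|]; lra).
  assert (Hx0 := varphi_ge0 al be xi).
  unfold varphi in *. set (s := sqrt (al^2/4 + al/be*xi)) in *.
  assert (hs0 : 0 <= s) by apply sqrt_pos.
  assert (hs2 : s * s = al^2/4 + al/be*xi) by (apply sqrt_sqrt; nra).
  set (x := Rmax 0 (al/2 - 1 + s)) in *.
  set (u := 1 + x). set (v := 1 + y).
  assert (Hu : al < u) by (unfold u; lra). assert (Hv : al < v) by (unfold v; lra).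
  assert (HA : 1 - al/u = (u - al)/u) by (field; lra).
  assert (HB : 1 - al/v = (v - al)/v) by (field; lra).
  assert (HA0 : 0 < 1 - al/u) by (rewrite HA; apply Rdiv_lt_0_compat; lra).
  assert (HB0 : 0 < 1 - al/v) by (rewrite HB; apply Rdiv_lt_0_compat; lra).
  assert (E1 : ln (1 - al/v) - ln (1 - al/u) = ln ((1 - al/v) / (1 - al/u))).
  { unfold Rdiv at 3. rewrite ln_mult, ln_Rinv; [ring|auto|auto|apply Rinv_0_lt_compat; auto]. }
  assert (E2 : (1 - al/v) / (1 - al/u) - 1 = al * (v - u) / (v * (u - al))) by (field; lra).
  assert (L1 : ln ((1 - al/v) / (1 - al/u)) <= al * (v - u) / (v * (u - al))).
  { rewrite <- E2. apply ln_le. apply Rdiv_lt_0_compat; auto. }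
  assert (L2 : al * (v - u) / (v * (u - al)) <= al * (v - u) / (u * (u - al))).
  { apply div_le; try nra. assert (0 <= al * (u-al) * ((v-u)*(v-u))) by
      (apply Rmult_le_pos; [nra| apply Rle_0_sqr]). nra. }
  assert (L3 : al * (v - u) / (u * (u - al)) <= / xi * (be * y - be * x)).
  { unfold u, v. unfold x. destruct (Rle_dec 0 (al/2 - 1 + s)).
    - rewrite Rmax_right by lra.
      assert (s > al/2) by nra.
      replace ((1 + (al / 2 - 1 + s)) * (1 + (al / 2 - 1 + s) - al)) with (al/be*xi) by nra.
      right. field. lra.
    - rewrite Rmax_left by lra.
      assert (al/be*xi <= 1 - al) by nra.
      assert (al * xi <= be * (1 - al)).
      { replace (al*xi) with (al/be*xi*be) by (field; lra). nra. }
      replace (1 + y - (1 + 0)) with y by ring. replace (/ xi * (be * y - be * 0)) with ((be*y)/xi) by (field; lra).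
      apply div_le; nra. }
  fold u v. lra. Qed.

Theorem mainTheorem3 (rho : nat) (P2 : R) (alpha beta : nat -> R)
  (Hrho : (1 <= rho)%nat) (HP2 : 0 < P2)
  (Halpha : forall i, (i < rho)%nat -> 0 < alpha i < 1)
  (Hbeta : forall i, (i < rho)%nat -> 0 < beta i) :
  exists xi : R,
    (0 < xi /\ P2 = rsum rho (fun i => beta i * varphi (alpha i) (beta i) xi)) /\
    (forall xi' : R, 0 < xi' ->
       P2 = rsum rho (fun i => beta i * varphi (alpha i) (beta i) xi') -> xi' = xi) /\
    (let x := fun i => varphi (alpha i) (beta i) xi in
     feasible rho beta P2 x /\
     forall y : nat -> R, feasible rho beta P2 y -> objective rho alpha x <= objective rho alpha y).
Proof.
  set (g := fun t => rsum rho (fun i => beta i * varphi (alpha i) (beta i) t)).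
  assert (Hg0 : g 0 = 0).
  { apply rsum_zero. intros i Hi. rewrite varphi0 by auto. ring. }
  assert (Hmono : forall t1 t2, 0 <= t1 < t2 -> g t1 = 0 \/ g t1 < g t2).
  { intros t1 t2 Ht. apply (rsum_strict rho). intros i Hi.
    destruct (Halpha i Hi); pose proof (Hbeta i Hi).
    destruct (varphi_mono (alpha i) (beta i) t1 t2) as [[]|]; auto.
    left. split. rewrite H2; ring. nra. right. nra. }
  assert (Ha0 := Halpha 0%nat ltac:(lia)). assert (Hb0 := Hbeta 0%nat ltac:(lia)).
  set (M := P2 / beta 0%nat + 1).
  assert (HM : 0 < M) by (unfold M; assert (0 < P2 / beta 0%nat) by (apply Rdiv_lt_0_compat; lra); lra).
  set (X := beta 0%nat / alpha 0%nat * ((M+1)*(M+1))).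
  assert (HX : 0 < X) by (unfold X; apply Rmult_lt_0_compat; [apply Rdiv_lt_0_compat|]; nra).
  assert (HgX : P2 < g X).
  { assert (beta 0%nat * varphi (alpha 0%nat) (beta 0%nat) X <= g X).
    { apply (rsum_ge_term rho (fun i => beta i * varphi (alpha i) (beta i) X)); [|lia].
      intros i Hi. apply Rmult_le_pos. apply Rlt_le, Hbeta; auto. apply varphi_ge0. }
    assert (M + 1 <= sqrt (alpha 0%nat ^ 2 / 4 + alpha 0%nat / beta 0%nat * X)).
    { replace (alpha 0%nat / beta 0%nat * X) with ((M+1)*(M+1)) by (unfold X; field; lra).
      rewrite <- (sqrt_square (M+1)) at 1 by lra. apply sqrt_le_1_alt. nra. }
    assert (M < varphi (alpha 0%nat) (beta 0%nat) X).
    { unfold varphi. eapply Rlt_le_trans; [|apply Rmax_r]. lra. }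
    assert (beta 0%nat * M = P2 + beta 0%nat) by (unfold M; field; lra).
    nra. }
  destruct (IVT_interv (fun t => g t - P2) 0 X) as [z [Hz Hgz]]; auto.
  { intros a Ha. apply (continuity_pt_minus g (fun _ => P2)).
    apply (rsum_cont rho (fun i t => beta i * varphi (alpha i) (beta i) t)).
    intros i Hi. apply (continuity_pt_mult (fun _ => beta i) (varphi (alpha i) (beta i))).
    apply continuity_pt_const. intros x y; reflexivity.
    destruct (Halpha i Hi). apply varphi_cont; [lra | apply Hbeta; auto | lra].
    apply continuity_pt_const. intros x y; reflexivity. }
  lra. lra.
  assert (Hz0 : 0 < z). { destruct (Req_dec z 0). subst z. lra. lra. }
  assert (Hgz' : g z = P2) by lra.
  exists z. split; [split; [auto | symmetry; exact Hgz'] | split].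
  - intros xi' Hxi' Hg'. fold (g xi') in Hg'.
    destruct (Rtotal_order z xi') as [Hl|[He|Hl]]; auto.
    + destruct (Hmono z xi'); lra.
    + destruct (Hmono xi' z); lra.
  - intros x. assert (Hfx : feasible rho beta P2 x).
    { split. unfold x. fold (g z). lra. intros; apply varphi_ge0. }
    split; auto. intros y [Hy1 Hy2]. unfold objective. apply Ropp_le_contravar.
    eapply Rle_trans.
    apply (rsum_le rho _ (fun i => ln (1 - alpha i / (1 + x i)) + / z * (beta i * y i - beta i * x i))).
    intros i Hi. destruct (Halpha i Hi). apply key; [auto|apply Hbeta; auto|lra|apply Hy2; auto].
    rewrite rsum_lin.
    assert (rsum rho (fun i => beta i * x i) = P2) by (unfold x; fold (g z); lra).
    assert (0 < / z) by (apply Rinv_0_lt_compat; lra).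
    match goal with H : rsum rho (fun i => beta i * x i) = P2 |- _ => rewrite H end.
    assert (/ z * (rsum rho (fun i => beta i * y i) - P2) <= 0) by (assert (0 <= / z * (P2 - rsum rho (fun i => beta i * y i))) by (apply Rmult_le_pos; lra); replace (/ z * (rsum rho (fun i => beta i * y i) - P2)) with (- (/ z * (P2 - rsum rho (fun i => beta i * y i)))) by ring; lra).
    lra.
Qed.
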